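(* Let $U$ and $V$ be finite-dimensional vector spaces over a field $\mathbb{K}$. (a) Every range-compatible linear map on $\mathcal{L}(U,V)$ is local. (b) If $\dim V>1$, every range-compatible group homomorphism on $\mathcal{L}(U,V)$ is local.
   Context: A map $F:\mathcal{L}(U,V)\to V$ is range-compatible when $F(s)\in\operatorname{im}s$ for all $s$, and local when there is $x\in U$ with $F(s)=s(x)$ for all $s$. *)

(* Defs.v *)
(* finite-dimensional vector spaces are vectType K,
   L(U,V) is 'Hom(U,V) (itself a vectType K). *)
From HB Require Import structures.
From mathcomp Require Import all_boot all_order all_algebra.
Set Implicit Arguments. Unset Strict Implicit. Unset Printing Implicit Defensive.
Import GRing.Theory.
Local Open Scope ring_scope.

Definition range_compatible (K : fieldType) (U V : vectType K)
  (F : 'Hom(U, V) -> V) : Prop :=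
  forall s : 'Hom(U, V), F s \in limg s.

Definition local_map (K : fieldType) (U V : vectType K)
  (F : 'Hom(U, V) -> V) : Prop :=
  exists x : U, forall s : 'Hom(U, V), F s = s x.

(* Main.v *)
Require Import Defs.
From HB Require Import structures.
From mathcomp Require Import all_boot all_order all_algebra.
From Stdlib Require Import Classical ClassicalEpsilon.
Import GRing.Theory.
Local Open Scope ring_scope.
Set Implicit Arguments. Unset Strict Implicit. Unset Printing Implicit Defensive.
Lemma step1 (K : fieldType) (V : vectType K) (g : V -> V) (gD : forall y z, g (y + z) = g y + g z)
  (Hg : forall y, g y \in <[y]>%VS) (c : K) (y z : V) :
  y != 0 -> z \notin <[y]>%VS -> g y = c *: y -> g z = c *: z.
Proof.
move=> y0 zy gy.
have [b gz] := vlineP _ _ (Hg z).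
have [d gyz] := vlineP _ _ (Hg (y + z)).
have E : (c - d) *: y = (d - b) *: z.
  move: gyz; rewrite gD gy gz scalerDr !scalerBl => H.
  apply/eqP; rewrite subr_eq -addrA (addrC _ (d *: y)) addrA -subr_eq opprK H.
  by rewrite addrC.
have db : d = b.
  apply/eqP; apply/negPn/negP => nz.
  move: zy; rewrite -subr_eq0 in nz.
  have -> : z = ((d - b)^-1 * (c - d)) *: y by rewrite -scalerA E scalerA mulVf // scale1r.
  by rewrite memvZ ?memv_line ?orbT.
move: E; rewrite db subrr scale0r => /eqP; rewrite scaler_eq0 (negPf y0) orbF subr_eq0 => /eqP cb.
by rewrite gz cb.
Qed.
Lemma scal_key (K : fieldType) (V : vectType K) (g : V -> V) (gD : forall y z, g (y + z) = g y + g z)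
  (Hg : forall y, g y \in <[y]>%VS)
  (Hl : (forall (a : K) y, g (a *: y) = a *: g y) \/ (1 < \dim (fullv : {vspace V}))%N) :
  exists c, forall y, g y = c *: y.
Proof.
pose v0 := vpick (fullv : {vspace V}).
have [c gv0] := vlineP _ _ (Hg v0).
exists c => y.
have [->|y0] := eqVneq y 0; first by have [k ->] := vlineP _ _ (Hg 0); rewrite !scaler0.
have v00 : v0 != 0.
  rewrite vpick0; apply: contra y0 => /eqP f0.
  by have := memvf y; rewrite f0 memv0.
have [yl|yl] := boolP (y \in <[v0]>%VS); last exact: (step1 gD Hg v00 yl gv0).
have [a ya] := vlineP _ _ yl.
case: Hl => [Hl|Hd].
  by rewrite ya Hl gv0 !scalerA mulrC.
have [w wl] : exists w, w \notin <[v0]>%VS.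
  apply: NNPP => nw.
  have : (fullv <= <[v0]>)%VS.
    apply/subvP => u _; apply/negPn/negP => nu; apply: nw; by exists u.
  move/dimvS; rewrite dim_vline v00 /= => H.
  by have := leq_trans Hd H.
have w0 : w != 0 by apply: contra wl => /eqP ->; rewrite mem0v.
have gw := step1 gD Hg v00 wl gv0.
apply: (step1 (y := w) gD Hg) => //.
apply/negP => /vlineP [b yb].
have b0 : b != 0 by apply: contra y0 => /eqP b0; rewrite yb b0 scale0r.
move: wl; have -> : w = (b^-1 * a) *: v0 by rewrite -scalerA -ya yb scalerA mulVf // scale1r.
by rewrite memvZ ?memv_line ?orbT.
Qed.

Definition r1 (K : fieldType) (U V : vectType K) (i : 'I_(\dim (fullv : {vspace U}))) (y : V) (u : U) : V :=
  coord (vbasis (fullv : {vspace U})) i u *: y.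

Lemma r1_lin (K : fieldType) (U V : vectType K) i (y : V) : linear (@r1 K U V i y).
Proof. by move=> a u v; rewrite /r1 linearP scalerDl scalerA. Qed.

HB.instance Definition _ (K : fieldType) (U V : vectType K) i (y : V) :=
  GRing.isLinear.Build K U V *:%R (@r1 K U V i y) (r1_lin i y).

Definition R1 (K : fieldType) (U V : vectType K) i (y : V) : 'Hom(U, V) :=
  linfun (@r1 K U V i y).

Lemma R1E (K : fieldType) (U V : vectType K) i (y : V) u :
  R1 i y u = coord (vbasis (fullv : {vspace U})) i u *: y.
Proof. by rewrite /R1 lfunE. Qed.

Lemma main_gen (K : fieldType) (U V : vectType K) (F : {additive 'Hom(U, V) -> V})
  (HF : range_compatible F)
  (Hl : (forall i (a : K) (y : V), F (R1 i (a *: y)) = a *: F (R1 i y))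
        \/ (1 < \dim (fullv : {vspace V}))%N) :
  local_map F.
Proof.
have key : forall i, exists c, forall y, F (R1 i y) = c *: y.
  move=> i; apply: (@scal_key K V (fun y => F (R1 i y))).
  - move=> y z; rewrite -raddfD; congr (F _); apply/lfunP => u.
    by rewrite add_lfunE !R1E scalerDr.
  - move=> y; have /memv_imgP [u _ ->] := HF (R1 i y).
    by rewrite R1E memvZ ?memv_line ?orbT.
  - by case: Hl => [H|H]; [left => a y; apply: H | right].
pose lam i := proj1_sig (constructive_indefinite_description _ (key i)).
have lamP i y : F (R1 i y) = lam i *: y
  by rewrite /lam; case: (constructive_indefinite_description _ _).
exists (\sum_i lam i *: (vbasis (fullv : {vspace U}))`_i) => s.
have Es : s = \sum_i R1 i (s (vbasis (fullv : {vspace U}))`_i).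
  apply/lfunP => u; rewrite sum_lfunE.
  rewrite {1}(coord_vbasis (memvf u)) linear_sum.
  by apply: eq_bigr => i _; rewrite R1E linearZ.
rewrite {1}Es raddf_sum linear_sum; apply: eq_bigr => i _.
by rewrite lamP linearZ.
Qed.

Unset Implicit Arguments.

Theorem proposition2p5 (K : fieldType) (U V : vectType K) :
  (forall F : {linear 'Hom(U, V) -> V},
      range_compatible F -> local_map F) /\
  ((1 < \dim (fullv : {vspace V}))%N ->
   forall F : {additive 'Hom(U, V) -> V},
      range_compatible F -> local_map F).
Proof.
split.
- move=> F HF; apply: (main_gen HF); left => i a y.
  rewrite -linearZ /=; congr (F _); apply/lfunP => u.
  by rewrite scale_lfunE !R1E scalerA mulrC -scalerA.
- by move=> Hd F HF; apply: (main_gen HF); right.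
Qed.
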